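(* For every $C,\gamma>0$ and every $\alpha$ with $0<\alpha<\frac{1}{2C^{1/\gamma}+1}$ there exists $\varepsilon=\varepsilon(C,\gamma,\alpha)\in(0,1)$ such that the following holds. Let $\mu$ be a $(C,\gamma)$-absolutely decaying measure on $\mathbb{R}^n$ with $K=\operatorname{supp}\mu$, let $0<\rho<\rho_{C,\gamma}(\mu)$, $\mathbf{x}_1\in K$, $N\in\mathbb{N}$, and let $\mathcal L_1,\dots,\mathcal L_N$ be affine hyperplanes in $\mathbb{R}^n$. Then there exists $\mathbf{x}_2\in K$ with $B(\mathbf{x}_2,\alpha\rho)\subset B(\mathbf{x}_1,\rho)$ and $d(B(\mathbf{x}_2,\alpha\rho),\mathcal L_i)>\alpha\rho$ for at least $\lceil\varepsilon N\rceil$ of the indices $i\in\{1,\dots,N\}$.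
   Context: $B(\mathbf{x},\rho)$ is the closed Euclidean ball in $\mathbb{R}^n$, $d$ Euclidean distance (between sets: infimum over pairs of points). A locally finite Borel measure $\mu$ on $\mathbb{R}^n$ is $(C,\gamma)$-absolutely decaying if there is $\rho_0>0$ with $\mu(B(\mathbf{x},\rho)\cap\mathcal L^{(\varepsilon)})<C(\varepsilon/\rho)^\gamma\mu(B(\mathbf{x},\rho))$ for every affine hyperplane $\mathcal L$, every $\mathbf{x}\in\operatorname{supp}\mu$, every $0<\rho<\rho_0$ and every $\varepsilon>0$, where $\mathcal L^{(\varepsilon)}=\{\mathbf{x}: d(\mathbf{x},\mathcal L)\le\varepsilon\}$. $\rho_{C,\gamma}(\mu)$ denotes the supremum of all such $\rho_0$. *)

(* Defs.v *)
From Stdlib Require Fin.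
From Stdlib Require Import Reals Lra Lia List.
Open Scope R_scope.

Definition pt (n : nat) := Fin.t n -> R.

Fixpoint fsum (n : nat) : (Fin.t n -> R) -> R :=
  match n return (Fin.t n -> R) -> R with
  | O => fun _ => 0
  | S m => fun f => f Fin.F1 + fsum m (fun i => f (Fin.FS i))
  end.

Definition dot {n} (a x : pt n) : R := fsum n (fun i => a i * x i).

Definition dist {n} (x y : pt n) : R := sqrt (fsum n (fun i => (x i - y i) ^ 2)).

Definition ball {n} (x : pt n) (rho : R) : pt n -> Prop := fun y => dist x y <= rho.

Definition subset {n} (A B : pt n -> Prop) : Prop := forall x, A x -> B x.

Definition is_hyperplane {n} (L : pt n -> Prop) : Prop :=
  exists (a : pt n) (b : R), (exists i, a i <> 0) /\ forall x, L x <-> dot a x = b.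

(* d(x, L) <= eps, i.e. inf_{z in L} |x - z| <= eps. *)
Definition pt_set_dist_le {n} (x : pt n) (L : pt n -> Prop) (eps : R) : Prop :=
  forall s, eps < s -> exists z, L z /\ dist x z < s.

Definition nbhd {n} (L : pt n -> Prop) (eps : R) : pt n -> Prop :=
  fun x => pt_set_dist_le x L eps.

(* d(A, B) > t, i.e. inf_{y in A, z in B} |y - z| > t. *)
Definition set_dist_gt {n} (A B : pt n -> Prop) (t : R) : Prop :=
  exists s, t < s /\ forall y z, A y -> B z -> s <= dist y z.

Definition inter {n} (A B : pt n -> Prop) : pt n -> Prop := fun x => A x /\ B x.

Definition is_open {n} (U : pt n -> Prop) : Prop :=
  forall x, U x -> exists r, 0 < r /\ subset (ball x r) U.

Inductive Borel {n} : (pt n -> Prop) -> Prop :=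
  | Borel_open : forall U, is_open U -> Borel U
  | Borel_compl : forall A, Borel A -> Borel (fun x => ~ A x)
  | Borel_union : forall F : nat -> pt n -> Prop,
      (forall k, Borel (F k)) -> Borel (fun x => exists k, F k x).

Definition bounded {n} (A : pt n -> Prop) : Prop :=
  exists (x0 : pt n) (r : R), forall x, A x -> dist x0 x <= r.

(* A locally finite Borel measure on R^n, represented by its (finite) values
   on bounded Borel sets; values on other sets are irrelevant. *)
Record LFBMeasure (n : nat) := {
  meas :> (pt n -> Prop) -> R;
  meas_nonneg : forall A, Borel A -> bounded A -> 0 <= meas A;
  meas_sigma_add : forall F : nat -> pt n -> Prop,
      (forall k, Borel (F k)) ->
      (forall k l x, k <> l -> F k x -> F l x -> False) ->
      bounded (fun x => exists k, F k x) ->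
      infinite_sum (fun k => meas (F k)) (meas (fun x => exists k, F k x))
}.

Definition in_supp {n} (mu : LFBMeasure n) (x : pt n) : Prop :=
  forall r, 0 < r -> 0 < mu (ball x r).

Definition decay_radius {n} (C gamma : R) (mu : LFBMeasure n) (rho0 : R) : Prop :=
  0 < rho0 /\
  forall (L : pt n -> Prop) (x : pt n) (rho eps : R),
    is_hyperplane L -> in_supp mu x -> 0 < rho -> rho < rho0 -> 0 < eps ->
    mu (inter (ball x rho) (nbhd L eps)) < C * Rpower (eps / rho) gamma * mu (ball x rho).

Definition abs_decaying {n} (C gamma : R) (mu : LFBMeasure n) : Prop :=
  exists rho0, decay_radius C gamma mu rho0.

(* rho < rho_{C,gamma}(mu) = sup of admissible rho0 (possibly +infinity). *)
Definition lt_decay_sup {n} (C gamma : R) (mu : LFBMeasure n) (rho : R) : Prop :=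
  exists rho0, decay_radius C gamma mu rho0 /\ rho < rho0.

(* Main.v *)
Require Import Defs.
From Stdlib Require Import Reals List.
From Stdlib Require Import Arith Lra Lia Psatz Classical ClassicalEpsilon FunctionalExtensionality PropExtensionality.
Import Defs.
Open Scope R_scope.

Lemma fsum_S m f : fsum (S m) f = f Fin.F1 + fsum m (fun i => f (Fin.FS i)).
Proof. reflexivity. Qed.

Lemma fsum_le n : forall f g : Fin.t n -> R, (forall i, f i <= g i) -> fsum n f <= fsum n g.
Proof. induction n; intros f g H; simpl. lra. pose proof (H Fin.F1). pose proof (IHn (fun i => f (Fin.FS i)) (fun i => g (Fin.FS i)) (fun i => H (Fin.FS i))). lra. Qed.

Lemma fsum_ext n : forall f g : Fin.t n -> R, (forall i, f i = g i) -> fsum n f = fsum n g.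
Proof. induction n; intros f g H; simpl. lra. rewrite (H Fin.F1). f_equal. apply IHn. intro; apply H. Qed.

Lemma fsum_add n : forall f g : Fin.t n -> R, fsum n (fun i => f i + g i) = fsum n f + fsum n g.
Proof. induction n; intros f g; simpl. lra. rewrite IHn. ring. Qed.

Lemma fsum_scal n : forall (c : R) (f : Fin.t n -> R), fsum n (fun i => c * f i) = c * fsum n f.
Proof. induction n; intros c f; simpl. lra. rewrite IHn. ring. Qed.

Lemma fsum_const n c : fsum n (fun _ => c) = INR n * c.
Proof. induction n; simpl fsum. simpl; lra. rewrite IHn, S_INR. ring. Qed.

Lemma fsum_nonneg n : forall f : Fin.t n -> R, (forall i, 0 <= f i) -> 0 <= fsum n f.
Proof. intros f H. pose proof (fsum_le n (fun _ => 0) f H). rewrite fsum_const in H0. lra. Qed.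

Lemma fsum_term n : forall (f : Fin.t n -> R), (forall i, 0 <= f i) -> forall j, f j <= fsum n f.
Proof.
  induction n; intros f H j. inversion j.
  rewrite fsum_S. revert f H. pattern j. apply Fin.caseS'.
  - intros f H. pose proof (fsum_nonneg n (fun i => f (Fin.FS i)) (fun i => H _)). lra.
  - intros p f H. pose proof (IHn (fun i => f (Fin.FS i)) (fun i => H _) p). pose proof (H Fin.F1). lra.
Qed.

Lemma pdist_nonneg {n} (x y : pt n) : 0 <= dist x y.
Proof. apply sqrt_pos. Qed.

Lemma pdist_sym {n} (x y : pt n) : dist x y = dist y x.
Proof. unfold dist. f_equal. apply fsum_ext. intro; ring. Qed.

Lemma coord_le_dist {n} (x y : pt n) j : Rabs (x j - y j) <= dist x y.
Proof.
  unfold dist. rewrite <- sqrt_Rsqr_abs. apply sqrt_le_1_alt.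
  pose proof (fsum_term n (fun i => (x i - y i)^2) (fun i => pow2_ge_0 _) j). simpl in *. unfold Rsqr. lra.
Qed.

Lemma sqrt_le_of {a u : R} : 0 <= u -> a <= u ^ 2 -> sqrt a <= u.
Proof. intros Hu H. rewrite <- (sqrt_pow2 u Hu). apply sqrt_le_1_alt. exact H. Qed.

Lemma dist_box {n} (x y : pt n) w : 0 <= w -> (forall j, Rabs (x j - y j) <= w) -> dist x y <= sqrt (INR n) * w.
Proof.
  intros Hw H. unfold dist. apply sqrt_le_of. apply Rmult_le_pos; [apply sqrt_pos|lra].
  replace ((sqrt (INR n) * w)^2) with (INR n * w^2).
  2:{ rewrite Rpow_mult_distr, pow2_sqrt by apply pos_INR. ring. }
  rewrite <- fsum_const. apply fsum_le. intro i. specialize (H i).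
  unfold Rabs in H. destruct (Rcase_abs (x i - y i)); nra.
Qed.

Lemma cauchy_schwarz n (a b : Fin.t n -> R) :
  (fsum n (fun i => a i * b i))^2 <= fsum n (fun i => a i ^2) * fsum n (fun i => b i ^ 2).
Proof.
  set (A := fsum n (fun i => a i ^2)). set (B := fsum n (fun i => b i ^2)). set (X := fsum n (fun i => a i * b i)).
  assert (Hq : forall t, 0 <= A + (-2 * t) * X + t^2 * B).
  { intro t. replace (A + (-2*t)*X + t^2*B) with (fsum n (fun i => (a i - t * b i)^2)).
    apply fsum_nonneg. intro; apply pow2_ge_0.
    unfold A, X, B. rewrite <- !fsum_scal, <- !fsum_add. apply fsum_ext. intro; ring. }
  assert (HB : 0 <= B) by (apply fsum_nonneg; intro; apply pow2_ge_0).
  destruct (Req_dec B 0) as [H0|H0].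
  - destruct (Req_dec X 0) as [HX|HX].
    + rewrite HX. nra.
    + specialize (Hq ((A+1)/(2*X))). rewrite H0 in Hq.
      replace (A + -2 * ((A + 1) / (2 * X)) * X + ((A + 1) / (2 * X)) ^ 2 * 0) with (-1) in Hq by (field; auto). lra.
  - specialize (Hq (X/B)).
    replace (A + -2 * (X / B) * X + (X / B) ^ 2 * B) with ((A*B - X^2)/B) in Hq by (field; auto).
    assert (0 < B) by lra.
    assert (0 <= A*B - X^2). { apply Rmult_le_reg_r with (/B). apply Rinv_0_lt_compat; lra. rewrite Rmult_0_l. exact Hq. }
    lra.
Qed.

Lemma pdist_tri {n} (x y z : pt n) : dist x z <= dist x y + dist y z.
Proof.
  set (a := fun i => x i - y i). set (b := fun i => y i - z i).
  assert (E : fsum n (fun i => (x i - z i)^2) = fsum n (fun i => a i ^2) + 2 * fsum n (fun i => a i * b i) + fsum n (fun i => b i ^2)).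
  { rewrite <- !fsum_scal, <- !fsum_add. apply fsum_ext. intro; unfold a, b; ring. }
  unfold dist. rewrite E.
  change (fsum n (fun i => (x i - y i)^2)) with (fsum n (fun i => a i ^2)).
  change (fsum n (fun i => (y i - z i)^2)) with (fsum n (fun i => b i ^2)).
  set (A := fsum n (fun i => a i ^2)). set (B := fsum n (fun i => b i ^2)). set (X := fsum n (fun i => a i * b i)).
  pose proof (cauchy_schwarz n a b) as CS. fold A B X in CS.
  assert (HA : 0 <= A) by (apply fsum_nonneg; intro; apply pow2_ge_0).
  assert (HB : 0 <= B) by (apply fsum_nonneg; intro; apply pow2_ge_0).
  apply sqrt_le_of. pose proof (sqrt_pos A); pose proof (sqrt_pos B); lra.
  assert (X <= sqrt A * sqrt B).
  { rewrite <- sqrt_mult by auto. apply Rle_trans with (Rabs X). apply Rle_abs.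
    rewrite <- sqrt_Rsqr_abs. apply sqrt_le_1_alt. unfold Rsqr. simpl in CS. lra. }
  replace ((sqrt A + sqrt B)^2) with (sqrt A * sqrt A + sqrt B * sqrt B + 2 * (sqrt A * sqrt B)) by ring.
  rewrite !sqrt_sqrt by auto. lra.
Qed.

Lemma set_ext {n} (A B : pt n -> Prop) : (forall x, A x <-> B x) -> A = B.
Proof. intro H. apply functional_extensionality. intro x. apply propositional_extensionality. apply H. Qed.

Lemma Borel_ext {n} (A B : pt n -> Prop) : Borel A -> (forall x, A x <-> B x) -> Borel B.
Proof. intros HA H. rewrite <- (set_ext A B H). exact HA. Qed.

Lemma Borel_empty {n} : Borel (fun _ : pt n => False).
Proof. apply Borel_open. intros x []. Qed.

Lemma Borel_union2 {n} (A B : pt n -> Prop) : Borel A -> Borel B -> Borel (fun x => A x \/ B x).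
Proof.
  intros HA HB. apply Borel_ext with (fun x => exists k, (match k with O => A | _ => B end) x).
  apply Borel_union. intros [|k]; auto.
  intro x; split. intros [[|k] H]; auto. intros [H|H]. exists O; auto. exists 1%nat; auto.
Qed.

Lemma Borel_and {n} (A B : pt n -> Prop) : Borel A -> Borel B -> Borel (fun x => A x /\ B x).
Proof.
  intros HA HB. apply Borel_ext with (fun x => ~ ((fun y => ~ A y \/ ~ B y) x)).
  apply Borel_compl, Borel_union2; apply Borel_compl; auto.
  intro x; simpl; split. intro H. apply NNPP. intro H'. apply H. apply not_and_or. exact H'.
  intros [Ha Hb] [H|H]; auto.
Qed.

Lemma Borel_not {n} (A : pt n -> Prop) : Borel A -> Borel (fun x => ~ A x).
Proof. apply Borel_compl. Qed.

Lemma Borel_half {n} (j : Fin.t n) m : Borel (fun x : pt n => x j < m).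
Proof.
  apply Borel_open. intros x Hx. exists ((m - x j)/2). split. lra.
  intros y Hy. unfold ball in Hy. pose proof (coord_le_dist x y j). unfold Rabs in H.
  destruct (Rcase_abs (x j - y j)); lra.
Qed.

Lemma Borel_ball {n} (c : pt n) r : Borel (ball c r).
Proof.
  apply Borel_ext with (fun x => ~ (fun y => ~ ball c r y) x).
  2:{ intro x; split; [apply NNPP| auto]. }
  apply Borel_compl, Borel_open. intros x Hx. unfold ball in Hx.
  assert (r < dist c x) by lra.
  exists ((dist c x - r)/2). split. lra.
  intros y Hy. unfold ball in *. pose proof (pdist_tri c y x). rewrite (pdist_sym y x) in H0. lra.
Qed.

Lemma not_nbhd {n} (L : pt n -> Prop) t x : ~ nbhd L t x -> exists s, t < s /\ forall z, L z -> s <= dist x z.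
Proof.
  intro H. unfold nbhd, pt_set_dist_le in H. apply not_all_ex_not in H. destruct H as [s H].
  exists s. apply imply_to_and in H. destruct H as [H1 H2]. split; auto.
  intros z Hz. destruct (Rle_dec s (dist x z)); auto. exfalso; apply H2. exists z. split; auto. lra.
Qed.

Lemma Borel_nbhd {n} (L : pt n -> Prop) t : Borel (nbhd L t).
Proof.
  apply Borel_ext with (fun x => ~ (fun y => ~ nbhd L t y) x).
  2:{ intro x; split; [apply NNPP| auto]. }
  apply Borel_compl, Borel_open. intros x Hx. destruct (not_nbhd L t x Hx) as [s [Hs H]].
  exists ((s - t)/2). split. lra. intros y Hy HN. unfold ball in Hy.
  destruct (HN ((s + t)/2)) as [z [Hz Hd]]. lra.
  pose proof (H z Hz). pose proof (pdist_tri x y z). lra.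
Qed.

Lemma bounded_sub {n} (A B : pt n -> Prop) : bounded B -> (forall x, A x -> B x) -> bounded A.
Proof. intros [x0 [r H]] HAB. exists x0, r. auto. Qed.

Lemma bounded_ball {n} (c : pt n) r : bounded (ball c r).
Proof. exists c, r. auto. Qed.

Lemma meas_empty {n} (mu : LFBMeasure n) : mu (fun _ => False) = 0.
Proof.
  pose proof (meas_sigma_add n mu (fun _ _ => False) (fun _ => Borel_empty) (fun _ _ _ _ H _ => H)) as H.
  rewrite (set_ext (fun x => exists _ : nat, False) (fun _ => False)) in H.
  2:{ intro; split. intros [_ []]. intros []. }
  assert (Hb : bounded (fun _ : pt n => False)). { exists (fun _ => 0), 0. intros _ []. }
  specialize (H Hb). set (e := mu (fun _ => False)) in *.
  destruct (Req_dec e 0) as [|He]; auto. exfalso.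
  destruct (H (Rabs e / 2)) as [N HN]. apply Rdiv_lt_0_compat; [apply Rabs_pos_lt; auto|lra].
  specialize (HN (S N) (le_S _ _ (le_n _))). rewrite sum_cte in HN. unfold R_dist in HN.
  replace (e * INR (S (S N)) - e) with (e * INR (S N)) in HN by (rewrite (S_INR (S N)); ring).
  rewrite Rabs_mult, (Rabs_right (INR (S N))) in HN by (apply Rle_ge, pos_INR).
  assert (1 <= INR (S N)). { rewrite S_INR. pose proof (pos_INR N). lra. }
  pose proof (Rabs_pos_lt e He). nra.
Qed.

Lemma meas_add2 {n} (mu : LFBMeasure n) (A B : pt n -> Prop) : Borel A -> Borel B -> bounded A ->
  mu A = mu (fun x => A x /\ B x) + mu (fun x => A x /\ ~ B x).
Proof.
  intros HA HB Hbd.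
  set (F := fun k : nat => match k with O => (fun x => A x /\ B x) | 1%nat => (fun x => A x /\ ~ B x) | _ => (fun _ : pt n => False) end).
  assert (HF : forall k, Borel (F k)). { intros [|[|k]]; simpl. apply Borel_and; auto. apply Borel_and; auto. apply Borel_not; auto. apply Borel_empty. }
  assert (HU : (fun x => exists k, F k x) = A).
  { apply set_ext. intro x. split. intros [[|[|k]] H]; simpl in H; tauto.
    intro Hx. destruct (classic (B x)). exists O; simpl; auto. exists 1%nat; simpl; auto. }
  pose proof (meas_sigma_add n mu F HF) as H. rewrite HU in H.
  assert (Hd : forall k l x, k <> l -> F k x -> F l x -> False).
  { intros [|[|k]] [|[|l]] x Hkl; simpl; try tauto; lia. }
  specialize (H Hd Hbd).
  apply (uniqueness_sum (fun k => mu (F k))); auto.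
  assert (Hs : forall m, sum_f_R0 (fun k => mu (F k)) (S m) = mu (F O) + mu (F 1%nat)).
  { induction m. reflexivity. rewrite tech5, IHm. simpl F. rewrite meas_empty. ring. }
  intros eps Heps. exists 1%nat. intros m Hm. destruct m. lia. rewrite Hs. unfold R_dist.
  simpl F. rewrite Rminus_diag, Rabs_R0. auto.
Qed.

Lemma meas_mono {n} (mu : LFBMeasure n) (A B : pt n -> Prop) : Borel A -> Borel B -> bounded B ->
  (forall x, A x -> B x) -> mu A <= mu B.
Proof.
  intros HA HB Hbd HAB. rewrite (meas_add2 mu B A HB HA Hbd).
  rewrite (set_ext (fun x => B x /\ A x) A) by (intro x; split; [tauto| auto]).
  assert (0 <= mu (fun x => B x /\ ~ A x)).
  { apply meas_nonneg. apply Borel_and; auto. apply Borel_not; auto. apply bounded_sub with B; tauto. }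
  lra.
Qed.

Lemma meas_pos_ex {n} (mu : LFBMeasure n) (A : pt n -> Prop) : 0 < mu A -> exists x, A x.
Proof.
  intro H. apply NNPP. intro H'. rewrite (set_ext A (fun _ => False)) in H.
  rewrite meas_empty in H. lra. intro x; split; [intro Hx; apply H'; exists x; auto | intros []].
Qed.

Fixpoint lsum (l : list nat) (f : nat -> R) : R :=
  match l with nil => 0 | i :: l => f i + lsum l f end.

Lemma lsum_add l f g : lsum l (fun i => f i + g i) = lsum l f + lsum l g.
Proof. induction l; simpl; lra. Qed.

Lemma lsum_le l f g : (forall i, In i l -> f i <= g i) -> lsum l f <= lsum l g.
Proof. induction l; simpl; intros H. lra. pose proof (H a (or_introl eq_refl)). pose proof (IHl (fun i Hi => H i (or_intror Hi))). lra. Qed.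

Lemma lsum_const l c : lsum l (fun _ => c) = INR (length l) * c.
Proof. induction l; simpl lsum. simpl; lra. rewrite IHl. simpl length. rewrite S_INR. ring. Qed.

Lemma lsum_filter l f (p : nat -> bool) : (forall i, In i l -> p i = false -> f i = 0) -> lsum (filter p l) f = lsum l f.
Proof.
  induction l; simpl; intros H. auto.
  destruct (p a) eqn:E; simpl; rewrite IHl by auto. auto. rewrite (H a (or_introl eq_refl) E). ring.
Qed.

Definition posb (r : R) : bool := if Rlt_dec 0 r then true else false.

Definition box {n} (Q : pt n -> Prop) (lo hi : pt n) := forall x, Q x -> forall j, lo j <= x j <= hi j.

Definition Inv {n} (mu : LFBMeasure n) (Bp : pt n -> Prop) (G : nat -> pt n -> Prop) (c : R) (N : nat)
   (Q : pt n -> Prop) (lo hi : pt n) (S : list nat) : Prop :=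
  Borel Q /\ (forall x, Q x -> Bp x) /\ box Q lo hi /\ (forall j, lo j <= hi j) /\ NoDup S /\
  (forall i, In i S -> (i < N)%nat /\ 0 < mu (fun x => Q x /\ G i x)) /\
  c * mu Q < lsum S (fun i => mu (fun x => Q x /\ G i x)).

Lemma inv_of {n} (mu : LFBMeasure n) Bp G c N Q lo hi S :
  bounded Bp -> (forall i, Borel (G i)) ->
  Borel Q -> (forall x, Q x -> Bp x) -> box Q lo hi -> (forall j, lo j <= hi j) -> NoDup S ->
  (forall i, In i S -> (i < N)%nat) -> c * mu Q < lsum S (fun i => mu (fun x => Q x /\ G i x)) ->
  Inv mu Bp G c N Q lo hi (filter (fun i => posb (mu (fun x => Q x /\ G i x))) S) /\
  incl (filter (fun i => posb (mu (fun x => Q x /\ G i x))) S) S.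
Proof.
  intros Hbd HG HQ HQB Hbox Hlh HS HSN Hc. split.
  - split; [auto|split; [auto|split; [auto|split; [auto|split]]]].
    + apply NoDup_filter; auto.
    + split. intros i Hi. apply filter_In in Hi. split. apply HSN; tauto.
      destruct Hi as [_ Hi]. unfold posb in Hi. destruct (Rlt_dec _ _); auto. discriminate.
      rewrite lsum_filter. auto. intros i Hi Hp. unfold posb in Hp. destruct (Rlt_dec _ _). discriminate.
        assert (0 <= mu (fun x => Q x /\ G i x)). apply meas_nonneg. apply Borel_and; auto. apply bounded_sub with Bp; auto. intros x [Hx _]; auto.
      lra.
  - intros i Hi. apply filter_In in Hi. tauto.
Qed.

Definition upd {n} (f : pt n) (j : Fin.t n) (v : R) : pt n := fun j' => if Fin.eq_dec j j' then v else f j'.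

Lemma split_step {n} (mu : LFBMeasure n) Bp G c N Q lo hi S (j : Fin.t n) :
  Borel Bp -> bounded Bp -> (forall i, Borel (G i)) ->
  Inv mu Bp G c N Q lo hi S ->
  exists Q' lo' hi' S', Inv mu Bp G c N Q' lo' hi' S' /\ (forall x, Q' x -> Q x) /\
    (forall j', lo j' <= lo' j' /\ hi' j' <= hi j') /\ (forall j', hi' j' - lo' j' <= hi j' - lo j') /\
    hi' j - lo' j <= (hi j - lo j) / 2 /\ incl S' S.
Proof.
  intros HBp Hbd HG [HQ [HQB [Hbox [Hlh [HS [HSN Hc]]]]]].
  set (m := (lo j + hi j)/2).
  set (H1 := fun x : pt n => x j < m).
  assert (HH1 : Borel H1) by apply Borel_half.
  assert (HQbd : bounded Q) by (apply bounded_sub with Bp; auto).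
  assert (EQ : mu Q = mu (fun x => Q x /\ H1 x) + mu (fun x => Q x /\ ~ H1 x)) by (apply meas_add2; auto).
  assert (EG : forall i, mu (fun x => Q x /\ G i x) = mu (fun x => (Q x /\ H1 x) /\ G i x) + mu (fun x => (Q x /\ ~ H1 x) /\ G i x)).
  { intro i. rewrite (meas_add2 mu (fun x => Q x /\ G i x) H1).
    f_equal; f_equal; apply set_ext; intro; tauto.
    apply Borel_and; auto. auto. apply bounded_sub with Q; tauto. }
  assert (Hl : lsum S (fun i => mu (fun x => Q x /\ G i x)) =
     lsum S (fun i => mu (fun x => (Q x /\ H1 x) /\ G i x)) + lsum S (fun i => mu (fun x => (Q x /\ ~ H1 x) /\ G i x))).
  { rewrite <- lsum_add. f_equal. apply functional_extensionality. intro i. apply EG. }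
  assert (HSN' : forall i, In i S -> (i < N)%nat) by (intros i Hi; apply HSN; auto).
  destruct (Rlt_dec (c * mu (fun x => Q x /\ H1 x)) (lsum S (fun i => mu (fun x => (Q x /\ H1 x) /\ G i x)))) as [Hlt|Hge].
  - edestruct (inv_of mu Bp G c N (fun x => Q x /\ H1 x) lo (upd hi j m) S) as [Hi Hincl]; eauto.
    + apply Borel_and; auto.
    + intros x [Hx _]; auto.
    + intros x [Hx Hx1] j'. pose proof (Hbox x Hx j'). unfold upd. destruct (Fin.eq_dec j j'). subst j'. unfold H1 in Hx1; lra. auto.
    + intro j'. unfold upd. destruct (Fin.eq_dec j j'). subst j'. unfold m. specialize (Hlh j). lra. auto.
    + do 4 eexists. split. exact Hi. split. intros x [Hx _]; auto. split.
      intro j'. unfold upd. destruct (Fin.eq_dec j j'). subst j'. unfold m. specialize (Hlh j). lra. lra.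
      split. intro j'. unfold upd. destruct (Fin.eq_dec j j'). subst j'. unfold m. specialize (Hlh j). lra. lra.
      split. unfold upd. destruct (Fin.eq_dec j j); [|congruence]. unfold m. lra. exact Hincl.
  - assert (Hlt : c * mu (fun x => Q x /\ ~ H1 x) < lsum S (fun i => mu (fun x => (Q x /\ ~ H1 x) /\ G i x))).
    { rewrite EQ, Rmult_plus_distr_l, Hl in Hc. apply Rnot_lt_le in Hge. lra. }
    edestruct (inv_of mu Bp G c N (fun x => Q x /\ ~ H1 x) (upd lo j m) hi S) as [Hi Hincl]; eauto.
    + apply Borel_and; auto. apply Borel_not; auto.
    + intros x [Hx _]; auto.
    + intros x [Hx Hx1] j'. pose proof (Hbox x Hx j'). unfold upd. destruct (Fin.eq_dec j j'). subst j'. unfold H1 in Hx1; lra. auto.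
    + intro j'. unfold upd. destruct (Fin.eq_dec j j'). subst j'. unfold m. specialize (Hlh j). lra. auto.
    + do 4 eexists. split. exact Hi. split. intros x [Hx _]; auto. split.
      intro j'. unfold upd. destruct (Fin.eq_dec j j'). subst j'. unfold m. specialize (Hlh j). lra. lra.
      split. intro j'. unfold upd. destruct (Fin.eq_dec j j'). subst j'. unfold m. specialize (Hlh j). lra. lra.
      split. unfold upd. destruct (Fin.eq_dec j j); [|congruence]. unfold m. lra. exact Hincl.
Qed.

Lemma multi_step {n} (mu : LFBMeasure n) Bp G c N (js : list (Fin.t n)) :
  Borel Bp -> bounded Bp -> (forall i, Borel (G i)) ->
  forall Q lo hi S, Inv mu Bp G c N Q lo hi S ->
  exists Q' lo' hi' S', Inv mu Bp G c N Q' lo' hi' S' /\ (forall x, Q' x -> Q x) /\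
    (forall j', lo j' <= lo' j' /\ hi' j' <= hi j') /\ (forall j', hi' j' - lo' j' <= hi j' - lo j') /\
    (forall j, In j js -> hi' j - lo' j <= (hi j - lo j) / 2) /\ incl S' S.
Proof.
  intros HBp Hbd HG. induction js as [|j js IH]; intros Q lo hi S HI.
  - exists Q, lo, hi, S. split; [auto|split; [auto|split; [intro; lra|split; [intro; lra|split; [intros j []|apply incl_refl]]]]].
  - destruct (split_step mu Bp G c N Q lo hi S j HBp Hbd HG HI) as [Q1 [lo1 [hi1 [S1 [HI1 [HQ1 [Hn1 [Hw1 [Hj1 Hs1]]]]]]]]].
    destruct (IH Q1 lo1 hi1 S1 HI1) as [Q2 [lo2 [hi2 [S2 [HI2 [HQ2 [Hn2 [Hw2 [Hj2 Hs2]]]]]]]]].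
    exists Q2, lo2, hi2, S2. split; auto. split; auto. split.
    intro j'. destruct (Hn1 j'), (Hn2 j'). lra. split.
    intro j'. specialize (Hw1 j'). specialize (Hw2 j'). lra. split.
    intros j' [Heq|Hj']. subst j'. specialize (Hw2 j). lra. specialize (Hj2 j' Hj'). specialize (Hw1 j'). lra.
    eapply incl_tran; eauto.
Qed.

Fixpoint fin_enum (n : nat) : list (Fin.t n) :=
  match n with O => nil | S m => Fin.F1 :: map Fin.FS (fin_enum m) end.

Lemma fin_enum_all n (j : Fin.t n) : In j (fin_enum n).
Proof.
  induction j; simpl. auto. right. apply in_map. auto.
Qed.

Record State (n : nat) := mkS { sQ : pt n -> Prop; slo : pt n; shi : pt n; sS : list nat }.
Arguments sQ {n}. Arguments slo {n}. Arguments shi {n}. Arguments sS {n}.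

Definition InvS {n} (mu : LFBMeasure n) Bp G c N (s : State n) := Inv mu Bp G c N (sQ s) (slo s) (shi s) (sS s).

Definition relS {n} (s s' : State n) :=
  (forall x, sQ s' x -> sQ s x) /\ (forall j, slo s j <= slo s' j /\ shi s' j <= shi s j) /\
  (forall j, shi s' j - slo s' j <= (shi s j - slo s j) / 2) /\ incl (sS s') (sS s).

Lemma full_step {n} (mu : LFBMeasure n) Bp G c N s :
  Borel Bp -> bounded Bp -> (forall i, Borel (G i)) -> InvS mu Bp G c N s ->
  exists s', InvS mu Bp G c N s' /\ relS s s'.
Proof.
  intros HBp Hbd HG HI.
  destruct (multi_step mu Bp G c N (fin_enum n) HBp Hbd HG _ _ _ _ HI) as [Q' [lo' [hi' [S' [HI' [HQ [Hn [Hw [Hj Hs]]]]]]]]].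
  exists (mkS n Q' lo' hi' S'). split. exact HI'. unfold relS; simpl. split; auto. split; auto. split; auto.
  intro j. apply Hj. apply fin_enum_all.
Qed.

Lemma exists_stepf {n} (mu : LFBMeasure n) Bp G c N :
  Borel Bp -> bounded Bp -> (forall i, Borel (G i)) ->
  exists f : State n -> State n, forall s, InvS mu Bp G c N s -> InvS mu Bp G c N (f s) /\ relS s (f s).
Proof.
  intros HBp Hbd HG.
  assert (H : forall s, exists s', InvS mu Bp G c N s -> InvS mu Bp G c N s' /\ relS s s').
  { intro s. destruct (classic (InvS mu Bp G c N s)) as [HI|HI].
    destruct (full_step mu Bp G c N s HBp Hbd HG HI) as [s' Hs']. exists s'; auto.
    exists s. intro; contradiction. }
  exists (fun s => proj1_sig (constructive_indefinite_description _ (H s))).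
  intro s. exact (proj2_sig (constructive_indefinite_description _ (H s))).
Qed.

Lemma nat_min (f : nat -> nat) : exists K, forall k, (f K <= f k)%nat.
Proof.
  assert (H : forall m k0, (f k0 <= m)%nat -> exists K, forall k, (f K <= f k)%nat).
  { induction m; intros k0 Hk0.
    - exists k0. intro k. lia.
    - destruct (classic (exists k1, (f k1 < f k0)%nat)) as [[k1 Hk1]|Hno].
      + apply (IHm k1). lia.
      + exists k0. intro k. destruct (le_lt_dec (f k0) (f k)); auto. exfalso; apply Hno; eauto. }
  apply (H (f O) O). lia.
Qed.

Lemma pow2_big k : INR k < 2 ^ k /\ 1 <= 2 ^ k.
Proof. induction k. simpl; lra. rewrite S_INR. simpl. lra. Qed.

Lemma small_eventually (a eta : R) : 0 < eta -> exists k0, forall k, (k0 <= k)%nat -> a / 2 ^ k < eta.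
Proof.
  intro Heta. destruct (INR_archimed eta a Heta) as [k0 Hk0]. exists k0. intros k Hk.
  pose proof (pow2_big k0). pose proof (Rle_pow 2 k0 k ltac:(lra) Hk).
  apply Rmult_lt_reg_r with (2^k). lra. unfold Rdiv. rewrite Rmult_assoc, Rinv_l by lra. nra.
Qed.

Lemma limit_point {n} (mu : LFBMeasure n) (Bp : pt n -> Prop) (G : nat -> pt n -> Prop) c N (s0 : State n) w0 :
  Borel Bp -> bounded Bp -> (forall i, Borel (G i)) -> 0 <= c ->
  InvS mu Bp G c N s0 -> 0 < w0 -> (forall j, shi s0 j - slo s0 j <= w0) ->
  exists (z : pt n) (S : list nat), in_supp mu z /\ (forall eta, 0 < eta -> exists x, Bp x /\ dist x z <= eta) /\
    NoDup S /\ (forall i, In i S -> (i < N)%nat /\ forall eta, 0 < eta -> exists x, G i x /\ dist x z <= eta) /\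
    c < INR (length S).
Proof.
  intros HBp Hbd HG Hc HI0 Hw0p Hw0.
  destruct (exists_stepf mu Bp G c N HBp Hbd HG) as [f Hf].
  set (sq := fun k => Nat.iter k f s0).
  assert (HI : forall k, InvS mu Bp G c N (sq k)).
  { induction k. exact HI0. simpl. apply Hf. exact IHk. }
  assert (HR : forall k, relS (sq k) (sq (S k))).
  { intro k. apply (Hf (sq k) (HI k)). }
  assert (Hnest : forall d k, (forall x, sQ (sq (d + k)%nat) x -> sQ (sq k) x) /\
     (forall j, slo (sq k) j <= slo (sq (d+k)%nat) j /\ shi (sq (d+k)%nat) j <= shi (sq k) j) /\ incl (sS (sq (d+k)%nat)) (sS (sq k))).
  { induction d; intro k. simpl. split; auto. split. intro; lra. apply incl_refl.
    destruct (IHd k) as [A [B C]]. destruct (HR (d + k)%nat) as [A' [B' [_ C']]]. simpl plus.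
    split. auto. split. intro j. destruct (B j), (B' j). lra. eapply incl_tran; eauto. }
  assert (Hnest' : forall k m, (k <= m)%nat -> (forall x, sQ (sq m) x -> sQ (sq k) x) /\
     (forall j, slo (sq k) j <= slo (sq m) j /\ shi (sq m) j <= shi (sq k) j) /\ incl (sS (sq m)) (sS (sq k))).
  { intros k m Hkm. replace m with ((m - k) + k)%nat by lia. apply Hnest. }
  assert (Hlh : forall k j, slo (sq k) j <= shi (sq k) j).
  { intros k j. destruct (HI k) as [_ [_ [_ [H _]]]]. apply H. }
  assert (Hwid : forall k j, shi (sq k) j - slo (sq k) j <= w0 / 2 ^ k).
  { induction k; intro j. simpl. unfold Rdiv; rewrite Rinv_1, Rmult_1_r. apply Hw0.
    destruct (HR k) as [_ [_ [W _]]]. specialize (W j). specialize (IHk j). simpl pow.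
    replace (w0 / (2 * 2 ^ k)) with ((w0 / 2^k)/2). lra. field. pose proof (pow2_big k); lra. }
  assert (Hz : forall j, {m | is_lub (fun r => exists k, r = slo (sq k) j) m}).
  { intro j. apply completeness. exists (shi s0 j). intros r [k ->].
    destruct (Hnest' O k ltac:(lia)) as [_ [B _]]. specialize (B j). specialize (Hlh k j). simpl in B. lra.
    exists (slo (sq O) j). exists O. auto. }
  set (z := fun j => proj1_sig (Hz j)).
  assert (Hzb : forall k j, slo (sq k) j <= z j <= shi (sq k) j).
  { intros k j. unfold z. destruct (Hz j) as [m [Hub Hlub]]. simpl. split.
    apply Hub. exists k; auto.
    apply Hlub. intros r [m' ->]. destruct (le_lt_dec k m') as [Hkm|Hkm].
    destruct (Hnest' k m' Hkm) as [_ [B _]]. destruct (B j). specialize (Hlh m' j). lra.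
    destruct (Hnest' m' k ltac:(lia)) as [_ [B _]]. destruct (B j). specialize (Hlh k j). lra. }
  assert (Hclose : forall k x, sQ (sq k) x -> dist x z <= sqrt (INR n) * (w0 / 2 ^ k)).
  { intros k x Hx. apply dist_box. apply Rlt_le, Rdiv_lt_0_compat. lra. apply pow_lt; lra.
    intro j. destruct (HI k) as [_ [_ [Hbox _]]]. specialize (Hbox x Hx j). specialize (Hzb k j). specialize (Hwid k j).
    unfold Rabs; destruct (Rcase_abs _); lra. }
  assert (Hpos : forall k, 0 < mu (sQ (sq k)) /\ c < INR (length (sS (sq k)))).
  { intro k. destruct (HI k) as [HQ [HQB [_ [_ [_ [_ Hcs]]]]]].
    assert (HQbd : bounded (sQ (sq k))) by (apply bounded_sub with Bp; auto).
    assert (Hle : lsum (sS (sq k)) (fun i => mu (fun x => sQ (sq k) x /\ G i x)) <= lsum (sS (sq k)) (fun _ => mu (sQ (sq k)))).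
    { apply lsum_le. intros i _. apply meas_mono; auto. apply Borel_and; auto. intros x [Hx _]; auto. }
    rewrite lsum_const in Hle.
    assert (H0 : 0 <= mu (sQ (sq k))) by (apply meas_nonneg; auto).
    assert (0 < mu (sQ (sq k))). { destruct H0 as [H0|H0]; auto. rewrite <- H0 in *. nra. }
    split; auto. nra. }
  assert (Hsmall : forall eta, 0 < eta -> exists k0, forall k, (k0 <= k)%nat -> sqrt (INR n) * (w0 / 2 ^ k) < eta).
  { intros eta Heta. destruct (small_eventually (sqrt (INR n) * w0) eta Heta) as [k0 Hk0]. exists k0. intros k Hk.
    specialize (Hk0 k Hk). unfold Rdiv in *. rewrite <- Rmult_assoc. auto. }
  destruct (nat_min (fun k => length (sS (sq k)))) as [K HK].
  exists z, (sS (sq K)). split; [|split; [|split; [|split]]].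
  - intros r Hr. destruct (Hsmall r Hr) as [k0 Hk0]. specialize (Hk0 k0 (le_n _)).
    destruct (HI k0) as [HQ _].
    apply Rlt_le_trans with (mu (sQ (sq k0))). apply Hpos.
    apply meas_mono; auto. apply Borel_ball. apply bounded_ball.
    intros x Hx. unfold ball. rewrite pdist_sym. specialize (Hclose k0 x Hx). lra.
  - intros eta Heta. destruct (Hsmall eta Heta) as [k0 Hk0]. specialize (Hk0 k0 (le_n _)).
    destruct (meas_pos_ex mu _ (proj1 (Hpos k0))) as [x Hx]. exists x. split.
    destruct (HI k0) as [_ [HQB _]]. auto. specialize (Hclose k0 x Hx). lra.
  - destruct (HI K) as [_ [_ [_ [_ [HS _]]]]]. exact HS.
  - intros i Hi. split. destruct (HI K) as [_ [_ [_ [_ [_ [HSN _]]]]]]. apply HSN; auto.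
    intros eta Heta. destruct (Hsmall eta Heta) as [k0 Hk0]. set (k := Nat.max k0 K).
    specialize (Hk0 k (Nat.le_max_l _ _)).
    assert (Hin : In i (sS (sq k))).
    { destruct (Hnest' K k (Nat.le_max_r _ _)) as [_ [_ Hinc]].
      destruct (HI k) as [_ [_ [_ [_ [HSk _]]]]].
      apply (NoDup_length_incl HSk (HK k) Hinc). auto. }
    destruct (HI k) as [_ [_ [_ [_ [_ [HSN _]]]]]]. destruct (HSN i Hin) as [_ Hp].
    destruct (meas_pos_ex mu _ Hp) as [x [Hx Hg]]. exists x. split; auto. specialize (Hclose k x Hx). lra.
  - apply Hpos.
Qed.

Lemma approx_le a b : (forall eta, 0 < eta -> a <= b + eta) -> a <= b.
Proof. intro H. destruct (Rle_dec a b); auto. specialize (H ((a - b)/2)). lra. Qed.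

Lemma lsum_gt (l : list nat) f a : l <> nil -> (forall i, In i l -> a < f i) -> INR (length l) * a < lsum l f.
Proof.
  induction l as [|x l IH]; intros Hne H. congruence.
  simpl length. rewrite S_INR. simpl lsum. pose proof (H x (or_introl eq_refl)).
  destruct l as [|y l']. simpl. lra.
  assert (INR (length (y :: l')) * a < lsum (y :: l') f). apply IH. discriminate. intros; apply H; simpl; auto.
  lra.
Qed.

Lemma Rpower_pos x y : 0 < Rpower x y.
Proof. unfold Rpower. apply exp_pos. Qed.

Lemma Rpower_inv_base x y : 0 < x -> Rpower (/ x) y = / Rpower x y.
Proof. intro Hx. unfold Rpower. rewrite ln_Rinv by auto. rewrite <- exp_Ropp. f_equal. ring. Qed.

Theorem lemma3p2 :
  forall C gamma alpha : R,
    0 < C -> 0 < gamma -> 0 < alpha ->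
    alpha < 1 / (2 * Rpower C (1 / gamma) + 1) ->
    exists eps : R, 0 < eps < 1 /\
      forall (n : nat) (mu : LFBMeasure n) (rho : R) (x1 : pt n) (N : nat)
             (L : nat -> pt n -> Prop),
        abs_decaying C gamma mu ->
        0 < rho -> lt_decay_sup C gamma mu rho ->
        in_supp mu x1 ->
        (forall i, (i < N)%nat -> is_hyperplane (L i)) ->
        exists x2 : pt n,
          in_supp mu x2 /\
          subset (ball x2 (alpha * rho)) (ball x1 rho) /\
          exists idx : list nat,
            NoDup idx /\
            (forall i, In i idx ->
               (i < N)%nat /\ set_dist_gt (ball x2 (alpha * rho)) (L i) (alpha * rho)) /\
            eps * INR N <= INR (length idx).
Proof.
  intros C gamma alpha HC Hg Ha Hlt.
  set (P := Rpower C (1 / gamma)).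
  assert (HP : 0 < P) by apply Rpower_pos.
  assert (Ha1 : alpha * (2 * P + 1) < 1).
  { apply Rmult_lt_reg_r with (/ (2*P+1)). apply Rinv_0_lt_compat; lra.
    rewrite Rmult_assoc, Rinv_r by lra. rewrite Rmult_1_r. exact Hlt. }
  assert (Halpha1 : alpha < 1) by (pose proof (Rmult_lt_0_compat alpha P Ha HP); lra).
  set (a' := (alpha + (1 - alpha) / (2 * P)) / 2).
  assert (Hb : alpha < (1 - alpha) / (2 * P)).
  { apply Rmult_lt_reg_r with (2*P). lra. unfold Rdiv. rewrite Rmult_assoc, Rinv_l by lra. lra. }
  assert (Ha'1 : alpha < a') by (unfold a'; lra).
  assert (Ha'2 : a' < (1 - alpha) / (2 * P)) by (unfold a'; lra).
  set (q := 2 * a' / (1 - alpha)).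
  assert (Hq0 : 0 < q) by (unfold q; apply Rdiv_lt_0_compat; lra).
  assert (Hq1 : q < / P).
  { unfold q. apply Rmult_lt_reg_r with (1 - alpha). lra. unfold Rdiv. rewrite Rmult_assoc, Rinv_l by lra.
    apply Rmult_lt_reg_r with (2 * P). lra.
    replace (2 * a' * 1 * (2 * P)) with (2 * P * (2 * a')) by ring.
    replace (/ P * (1 - alpha) * (2 * P)) with (2 * (1 - alpha)) by (field; lra).
    unfold Rdiv in Ha'2. assert (a' * (2 * P) < (1 - alpha)).
    { apply Rmult_lt_reg_r with (/ (2*P)). apply Rinv_0_lt_compat; lra. rewrite Rmult_assoc, Rinv_r by lra. lra. }
    lra. }
  set (delta := C * Rpower q gamma).
  assert (Hd0 : 0 < delta) by (unfold delta; pose proof (Rpower_pos q gamma); nra).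
  assert (Hd1 : delta < 1).
  { unfold delta. assert (Rpower q gamma < Rpower (/ P) gamma) by (apply Rlt_Rpower_l; lra).
    rewrite Rpower_inv_base in H by auto. unfold P in H. rewrite Rpower_mult in H.
    replace (1 / gamma * gamma) with 1 in H by (field; lra). rewrite Rpower_1 in H by auto.
    apply Rmult_lt_compat_l with (r := C) in H; auto. rewrite Rinv_r in H by lra. exact H. }
  exists (1 - delta). split. lra.
  intros n mu rho x1 N L _ Hrho [rho0 [[Hrho0 Hdecay] Hrr0]] Hx1 HL.
  destruct N as [|N'].
  { exists x1. split; auto. split.
    - intros y Hy. unfold ball in *. nra.
    - exists nil. split. constructor. split. intros i []. simpl. lra. }
  set (N := S N').
  set (r' := (1 - alpha) * rho). set (t := 2 * a' * rho).
  assert (Hr' : 0 < r') by (unfold r'; nra).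
  set (Bp := ball x1 r').
  set (G := fun i => fun x => ~ nbhd (L i) t x).
  set (eps := 1 - delta). set (c := INR N * eps).
  assert (HBp : Borel Bp) by apply Borel_ball.
  assert (Hbd : bounded Bp) by apply bounded_ball.
  assert (HG : forall i, Borel (G i)) by (intro i; apply Borel_not, Borel_nbhd).
  assert (HmuB : 0 < mu Bp) by (apply Hx1; auto).
  assert (Hgood : forall i, (i < N)%nat -> eps * mu Bp < mu (fun x => Bp x /\ G i x)).
  { intros i Hi. pose proof (meas_add2 mu Bp (nbhd (L i) t) HBp (Borel_nbhd _ _) Hbd) as E.
    assert (Hdi : mu (inter (ball x1 r') (nbhd (L i) t)) < C * Rpower (t / r') gamma * mu (ball x1 r')).
    { apply Hdecay; auto. unfold r'; nra. unfold t; nra. }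
    replace (t / r') with q in Hdi by (unfold q, t, r'; field; lra).
    unfold inter in Hdi. fold Bp in Hdi. fold delta in Hdi. unfold G. unfold eps. lra. }
  set (s0 := mkS n Bp (fun j => x1 j - (r' + 1)) (fun j => x1 j + (r' + 1)) (seq 0 N)).
  assert (HI0 : InvS mu Bp G c N s0).
  { unfold InvS, Inv, s0; cbn [sQ slo shi sS]. split; [auto|split; [auto|split; [|split; [|split; [|split]]]]].
    - intros x Hx j. pose proof (coord_le_dist x1 x j). unfold Bp, ball in Hx. unfold Rabs in H. destruct (Rcase_abs _); lra.
    - intro; lra.
    - apply seq_NoDup.
    - intros i Hi. apply in_seq in Hi. assert (Hi' : (i < N)%nat) by lia. split; auto.
      pose proof (Hgood i Hi'). assert (0 < eps * mu Bp) by (unfold eps; nra). lra.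
    - unfold c. rewrite Rmult_assoc. replace N with (length (seq 0 N)) at 1 by apply length_seq.
      apply lsum_gt. simpl. discriminate. intros i Hi. apply in_seq in Hi. apply Hgood. lia. }
  assert (Hc0 : 0 <= c) by (unfold c, eps; pose proof (pos_INR N); nra).
  destruct (limit_point mu Bp G c N s0 (2 * (r' + 1)) HBp Hbd HG Hc0 HI0 ltac:(lra)) as [z [S [Hz [HzB [HS [HSi Hlen]]]]]].
  { intro j; simpl; lra. }
  assert (Hzx1 : dist x1 z <= r').
  { apply approx_le. intros eta Heta. destruct (HzB eta Heta) as [x [Hx Hxz]]. unfold Bp, ball in Hx.
    pose proof (pdist_tri x1 x z). lra. }
  exists z. split; auto. split.
  - intros y Hy. unfold ball in *. pose proof (pdist_tri x1 z y). unfold r' in Hzx1. lra.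
  - exists S. split; auto. split.
    + intros i Hi. destruct (HSi i Hi) as [HiN Happ]. split; auto.
      exists (t - alpha * rho). split. unfold t; nra.
      intros y w Hy Hw. unfold ball in Hy.
      assert (Hzw : t <= dist z w).
      { apply approx_le. intros eta Heta. destruct (Happ eta Heta) as [x [Hx Hxz]].
        destruct (not_nbhd (L i) t x Hx) as [s [Hs Hsw]]. specialize (Hsw w Hw).
        pose proof (pdist_tri x z w). lra. }
      pose proof (pdist_tri z y w). lra.
    + unfold c, eps in Hlen. rewrite Rmult_comm. apply Rlt_le. exact Hlen.
Qed.
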